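(* Let $\kappa\in[1,2]$. There exists a real-valued function $h\in C_c^\infty(\mathbb R)$ with support contained in $[0,\infty)$ such that $$\int_{-1}^{1}\overline{\widehat h(-\xi)}\,\widehat h(\xi)\,\frac{d\xi}{\xi^2+\kappa}<0.$$
   Context: $\widehat h(\xi)=\int_{\mathbb R}h(x)e^{i\xi x}\,dx$ denotes the Fourier transform (the sign convention in the exponent is immaterial here). *)

(* Defs.v *)
From Stdlib Require Import Reals.
From Coquelicot Require Import Coquelicot.
Open Scope R_scope.

Definition smooth (h : R -> R) : Prop :=
  forall (n : nat) (x : R), ex_derive_n h n x.

Definition compact_support (h : R -> R) : Prop :=
  exists M : R, forall x : R, M < Rabs x -> h x = 0.

(* supp h is contained in [0, +oo) (equivalently, since [0,oo) is closed,
   h vanishes on (-oo, 0)). *)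
Definition support_in_nonneg (h : R -> R) : Prop :=
  forall x : R, x < 0 -> h x = 0.

(* Fourier transform  \hat h(xi) = \int_R h(x) e^{i xi x} dx,
   with e^{i t} = (cos t, sin t) (Coquelicot has no complex exp), as a C-valued improper Riemann integral over (-oo, +oo). *)
Definition fourier (h : R -> R) (xi : R) : C :=
  RInt_gen (V := C_R_CompleteNormedModule)
    (fun x : R => scal (h x) ((cos (xi * x), sin (xi * x)) : C))
    (Rbar_locally m_infty) (Rbar_locally p_infty).

(* Main.v *)
Require Import Defs.
From Stdlib Require Import Reals Lra Lia FunctionalExtensionality.
From Coquelicot Require Import Coquelicot.
Open Scope R_scope.

Inductive is_poly : (R -> R) -> Prop :=
| poly_const c : is_poly (fun _ => c)
| poly_id : is_poly (fun y => y)
| poly_plus p q : is_poly p -> is_poly q -> is_poly (fun y => p y + q y)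
| poly_mult p q : is_poly p -> is_poly q -> is_poly (fun y => p y * q y).

Lemma is_poly_ext p q : (forall y, p y = q y) -> is_poly p -> is_poly q.
Proof. intros H Hp. replace q with p; auto. apply functional_extensionality; auto. Qed.

Lemma poly_deriv p : is_poly p -> exists p', is_poly p' /\ forall y, is_derive p y (p' y).
Proof.
  induction 1 as [c| |p q Hp [p' [Hp' Dp]] Hq [q' [Hq' Dq]]|p q Hp [p' [Hp' Dp]] Hq [q' [Hq' Dq]]].
  - exists (fun _ => 0). split. constructor. intro y. apply (is_derive_const c y).
  - exists (fun _ => 1). split. constructor. intro y. apply (is_derive_id y).
  - exists (fun y => p' y + q' y). split. constructor; auto.
    intro y. apply (is_derive_plus p q y); auto.
  - exists (fun y => p' y * q y + p y * q' y). split.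
    constructor; constructor; auto.
    intro y. apply (is_derive_mult p q y); auto. intros; apply Rmult_comm.
Qed.

Lemma poly_bound p : is_poly p -> exists C n, 0 <= C /\ forall y, 0 <= y -> Rabs (p y) <= C * (1 + y) ^ n.
Proof.
  induction 1 as [c| |p q Hp [C1 [n1 [HC1 B1]]] Hq [C2 [n2 [HC2 B2]]]|p q Hp [C1 [n1 [HC1 B1]]] Hq [C2 [n2 [HC2 B2]]]].
  - exists (Rabs c), 0%nat. split. apply Rabs_pos. intros y _. simpl; lra.
  - exists 1, 1%nat. split. lra. intros y Hy. simpl. rewrite Rabs_pos_eq; lra.
  - exists (C1 + C2), (n1 + n2)%nat. split. lra. intros y Hy.
    eapply Rle_trans. apply Rabs_triang.
    assert (A1: (1 + y) ^ n1 <= (1+y)^(n1+n2)) by (apply Rle_pow; [lra|lia]).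
    assert (A2: (1 + y) ^ n2 <= (1+y)^(n1+n2)) by (apply Rle_pow; [lra|lia]).
    specialize (B1 y Hy). specialize (B2 y Hy).
    apply Rmult_le_compat_l with (r := C1) in A1; auto.
    apply Rmult_le_compat_l with (r := C2) in A2; auto. lra.
  - exists (C1 * C2), (n1 + n2)%nat. split. apply Rmult_le_pos; auto. intros y Hy.
    rewrite Rabs_mult, pow_add.
    replace (C1 * C2 * ((1 + y) ^ n1 * (1 + y) ^ n2)) with ((C1 * (1+y)^n1) * (C2 * (1+y)^n2)) by ring.
    apply Rmult_le_compat; auto using Rabs_pos.
Qed.

Definition psi (P : R -> R) (t : R) : R :=
  if Rlt_dec 0 t then P (/ t) * exp (- / t) else 0.

Lemma exp_pow_ge (y : R) (m : nat) : 0 <= y -> (1 + y / INR (S m)) ^ (S m) <= exp y.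
Proof.
  intros Hy.
  assert (E: forall k : nat, exp (INR k * (y / INR (S m))) = exp (y / INR (S m)) ^ k).
  { induction k. simpl. rewrite Rmult_0_l, exp_0. reflexivity.
    rewrite S_INR, Rmult_plus_distr_r, Rmult_1_l, exp_plus, IHk. simpl. ring. }
  specialize (E (S m)).
  replace (INR (S m) * (y / INR (S m))) with y in E.
  2:{ field. apply not_0_INR. lia. }
  rewrite E. apply pow_incr. split.
  - assert (0 < INR (S m)) by (apply lt_0_INR; lia).
    assert (0 <= y / INR (S m)) by (apply Rdiv_le_0_compat; lra). lra.
  - apply exp_ineq1_le.
Qed.

Lemma psi_bound P : is_poly P -> exists K, 0 <= K /\ forall t, Rabs (psi P t) <= K * t ^ 2.
Proof.
  intros HP. destruct (poly_bound P HP) as [C [n [HC B]]].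
  set (m := S (S n)).
  exists (C * INR m ^ m). split.
  { apply Rmult_le_pos; auto. apply pow_le. apply pos_INR. }
  intro t. unfold psi. destruct (Rlt_dec 0 t) as [Ht|Ht].
  2:{ rewrite Rabs_R0. apply Rmult_le_pos. apply Rmult_le_pos; auto. apply pow_le, pos_INR.
      apply pow2_ge_0. }
  set (y := / t).
  assert (Hy : 0 < y) by (apply Rinv_0_lt_compat; auto).
  assert (Hm : 1 <= INR m) by (unfold m; rewrite S_INR; pose proof (pos_INR (S n)); lra).
  rewrite Rabs_mult, (Rabs_pos_eq (exp _)) by (left; apply exp_pos).
  specialize (B y (Rlt_le _ _ Hy)).
  assert (E1 : (1 + y) ^ m <= INR m ^ m * exp y).
  { pose proof (exp_pow_ge y (S n) (Rlt_le _ _ Hy)) as H. fold m in H.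
    assert (H2: (1 + y) / INR m <= 1 + y / INR m).
    { unfold Rdiv. apply Rle_trans with (1 * / INR m + y * / INR m). lra.
      assert (/ INR m <= 1). { rewrite <- Rinv_1. apply Rinv_le_contravar; lra. } 
      nra. }
    assert (H3: ((1 + y) / INR m) ^ m <= exp y).
    { eapply Rle_trans; [|apply H]. apply pow_incr. split; auto.
      apply Rdiv_le_0_compat; lra. }
    unfold Rdiv in H3. rewrite Rpow_mult_distr, pow_inv in H3.
    assert (0 < INR m ^ m) by (apply pow_lt; lra).
    apply Rmult_le_compat_l with (r := INR m ^ m) in H3; [|lra].
    rewrite <- Rmult_assoc, (Rmult_comm (INR m ^ m)), Rmult_assoc, Rinv_r in H3; lra. }
  assert (E2 : (1 + y) ^ m = (1 + y) ^ n * (1+y)^2).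
  { unfold m. replace (S (S n)) with (n + 2)%nat by lia. apply pow_add. }
  assert (E3 : y ^ 2 <= (1 + y) ^ 2) by (apply pow_incr; lra).
  assert (E4 : t ^ 2 * y ^ 2 = 1).
  { unfold y. field. lra. }
  assert (E5 : exp (- y) * exp y = 1).
  { rewrite <- exp_plus. replace (- y + y) with 0 by ring. apply exp_0. }
  assert (P1 : 0 <= (1 + y) ^ n) by (apply pow_le; lra).
  assert (0 < exp (-y)) by apply exp_pos.
  assert (0 < exp y) by apply exp_pos.
  assert (0 < t ^ 2) by (apply pow_lt; auto).
  apply Rle_trans with (C * (1 + y) ^ n * exp (- y)).
  { apply Rmult_le_compat_r; lra. }
  rewrite Rmult_assoc, (Rmult_assoc C). apply Rmult_le_compat_l; auto.
  assert (F: (1 + y) ^ n * y ^ 2 <= INR m ^ m * exp y).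
  { rewrite E2 in E1. eapply Rle_trans; [|apply E1]. apply Rmult_le_compat_l; auto. }
  apply Rmult_le_compat_r with (r := t ^ 2 * exp (- y)) in F; [|nra].
  replace ((1 + y) ^ n * y ^ 2 * (t ^ 2 * exp (- y))) with ((1 + y) ^ n * exp (- y) * (t^2 * y^2)) in F by ring.
  replace (INR m ^ m * exp y * (t ^ 2 * exp (- y))) with (INR m ^ m * t ^ 2 * (exp (-y) * exp y)) in F by ring.
  rewrite E4, E5 in F. lra.
Qed.

Lemma is_derive_eq (f : R -> R) x l l' : is_derive f x l -> l = l' -> is_derive f x l'.
Proof. intros H ->; auto. Qed.

Lemma ball_R (x : R) (e : R) y : ball x e y <-> Rabs (y - x) < e.
Proof. reflexivity. Qed.

Lemma locally_gt (t : R) : 0 < t -> locally t (fun s => 0 < s).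
Proof.
  intros Ht. exists (mkposreal t Ht). intros y Hy. apply ball_R in Hy. simpl in Hy.
  apply Rabs_def2 in Hy. destruct Hy as [H1 H2]. change (minus y t) with (y - t) in *. lra.
Qed.

Lemma locally_lt (t : R) : t < 0 -> locally t (fun s => s < 0).
Proof.
  intros Ht. assert (H: 0 < - t) by lra. exists (mkposreal _ H). intros y Hy. apply ball_R in Hy. simpl in Hy.
  apply Rabs_def2 in Hy. destruct Hy as [H1 H2]. change (minus y t) with (y - t) in *. lra.
Qed.

Lemma psi_deriv P P' : is_poly P -> (forall y, is_derive P y (P' y)) ->
  forall t, is_derive (psi P) t (psi (fun y => y ^ 2 * (P y - P' y)) t).
Proof.
  intros HP DP t.
  destruct (Rtotal_order t 0) as [Hlt|[Heq|Hgt]].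
  - apply is_derive_ext_loc with (fun _ => 0).
    { generalize (locally_lt t Hlt). apply filter_imp. intros s Hs. unfold psi.
      destruct (Rlt_dec 0 s); auto; lra. }
    unfold psi. destruct (Rlt_dec 0 t); [lra|]. apply (is_derive_const 0 t).
  - subst t. apply is_derive_Reals. destruct (psi_bound P HP) as [K [HK B]].
    assert (Z: forall Q, psi Q 0 = 0) by (intro; unfold psi; destruct Rlt_dec; lra).
    rewrite Z.
    intros eps Heps. assert (Hd: 0 < eps / (K + 1)) by (apply Rdiv_lt_0_compat; lra).
    exists (mkposreal _ Hd). intros h Hh Hha. simpl in Hha.
    rewrite Z, Rplus_0_l, Rminus_0_r, Rminus_0_r.
    specialize (B h).
    assert (0 < Rabs h) by (apply Rabs_pos_lt; auto).
    unfold Rdiv. rewrite Rabs_mult, Rabs_inv.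
    apply Rle_lt_trans with (K * h ^ 2 * / Rabs h).
    { apply Rmult_le_compat_r; auto. left; apply Rinv_0_lt_compat; auto. }
    replace (K * h ^ 2 * / Rabs h) with (K * Rabs h).
    2:{ rewrite <- (pow2_abs h). field. lra. }
    apply Rle_lt_trans with (K * (eps / (K+1))).
    { apply Rmult_le_compat_l; lra. }
    unfold Rdiv. rewrite <- Rmult_assoc. apply Rmult_lt_reg_r with (K + 1). lra.
    rewrite Rmult_assoc, Rinv_l by lra. nra.
  - apply is_derive_ext_loc with (fun s => P (/ s) * exp (- / s)).
    { generalize (locally_gt t Hgt). apply filter_imp. intros s Hs. unfold psi.
      destruct (Rlt_dec 0 s); auto; lra. }
    unfold psi. destruct (Rlt_dec 0 t); [|lra].
    assert (Dinv : is_derive (fun s : R => / s) t (- / t ^ 2)).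
    { eapply is_derive_eq. apply is_derive_inv. apply (is_derive_id t). lra.
      unfold one; simpl. field. lra. }
    eapply is_derive_eq.
    apply (is_derive_mult (fun s => P (/ s)) (fun s => exp (- / s))).
    + apply (is_derive_comp P (fun s => / s)). apply DP. apply Dinv.
    + apply (is_derive_comp exp (fun s => - / s)). apply is_derive_exp.
      apply (is_derive_opp (fun s => / s)). apply Dinv.
    + intros; apply Rmult_comm.
    + unfold plus, mult, scal, opp; simpl. unfold mult; simpl. field. lra.
Qed.

Definition q (x : R) : R := x * (1/2 - x).

Lemma is_derive_q x : is_derive q x (1/2 - 2 * x).
Proof. unfold q. auto_derive; auto. ring. Qed.

Definition Pt (P P' : R -> R) := fun y => y ^ 2 * (P y - P' y).

Lemma Pt_poly P P' : is_poly P -> is_poly P' -> is_poly (Pt P P').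
Proof.
  intros HP HP'. unfold Pt.
  apply poly_mult. apply is_poly_ext with (fun y => y * (y * 1)). intros; simpl; ring.
  apply poly_mult. constructor. apply poly_mult; constructor.
  apply is_poly_ext with (fun y => P y + (-1) * P' y). intros; ring.
  apply poly_plus; auto. apply poly_mult; auto. constructor.
Qed.

Lemma Qt_deriv r r' P P' x : is_poly P -> (forall y, is_derive r y (r' y)) -> (forall y, is_derive P y (P' y)) ->
  is_derive (fun x => r x * psi P (q x)) x
    (r' x * psi P (q x) + (r x * (1/2 - 2 * x)) * psi (Pt P P') (q x)).
Proof.
  intros HP Dr DP.
  eapply is_derive_eq.
  apply (is_derive_mult r (fun x => psi P (q x))).
  apply Dr. apply (is_derive_comp (psi P) q). apply psi_deriv; auto. apply is_derive_q.
  intros; apply Rmult_comm.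
  unfold plus, mult, scal, Pt; simpl. unfold mult; simpl. ring.
Qed.

Inductive Qf : (R -> R) -> Prop :=
| Q0 : Qf (fun _ => 0)
| Qt r P : is_poly r -> is_poly P -> Qf (fun x => r x * psi P (q x))
| Qp f g : Qf f -> Qf g -> Qf (fun x => f x + g x).

Lemma Q_deriv f : Qf f -> exists f', Qf f' /\ forall x, is_derive f x (f' x).
Proof.
  induction 1 as [|r P Hr HP|f g Hf [f' [Hf' Df]] Hg [g' [Hg' Dg]]].
  - exists (fun _ => 0). split. constructor. intro x. apply (is_derive_const 0 x).
  - destruct (poly_deriv r Hr) as [r' [Hr' Dr]].
    destruct (poly_deriv P HP) as [P' [HP' DP]].
    exists (fun x => r' x * psi P (q x) + (r x * (1/2 - 2 * x)) * psi (Pt P P') (q x)).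
    split.
    + constructor; constructor; auto.
      apply poly_mult; auto.
      apply is_poly_ext with (fun x => 1/2 + (-2) * x). intros; ring.
      constructor. constructor. constructor; constructor.
      apply Pt_poly; auto.
    + intro x. apply Qt_deriv; auto.
  - exists (fun x => f' x + g' x). split. constructor; auto.
    intro x. apply (is_derive_plus f g x); auto.
Qed.

Lemma Q_smooth f : Qf f -> smooth f.
Proof.
  intros Hf.
  assert (H : forall n, exists g, Qf g /\ Derive_n f n = g).
  { induction n as [|n [g [Hg E]]].
    - exists f. split; auto.
    - destruct (Q_deriv g Hg) as [g' [Hg' Dg]]. exists g'. split; auto.
      simpl. rewrite E. apply functional_extensionality. intro x. apply is_derive_unique. auto. }
  intros n x. destruct n as [|n]. exact I. simpl.
  destruct (H n) as [g [Hg E]]. rewrite E. destruct (Q_deriv g Hg) as [g' [_ Dg]].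
  exists (g' x). auto.
Qed.

Definition P1c : R -> R := fun _ => 1.
Definition P0c : R -> R := fun _ => 0.
Definition g (x : R) : R := psi P1c (q x).
Definition h (x : R) : R := (1/2 - 2 * x) * psi (Pt P1c P0c) (q x).

Lemma g_deriv x : is_derive g x (h x).
Proof.
  assert (H := Qt_deriv (fun _ => 1) (fun _ => 0) P1c P0c x (poly_const 1)
     (fun y => is_derive_const 1 y) (fun y => is_derive_const 1 y)).
  apply is_derive_ext with (f := fun x => 1 * psi P1c (q x)).
  intro; unfold g. apply Rmult_1_l.
  eapply is_derive_eq. exact H. unfold h. simpl. rewrite Rmult_0_l, Rplus_0_l, Rmult_1_l. reflexivity.
Qed.

Lemma h_Q : Qf h.
Proof.
  unfold h. apply Qt.
  apply is_poly_ext with (fun x => 1/2 + (-2) * x). intros; ring.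
  constructor. constructor. constructor; constructor.
  apply Pt_poly; unfold P1c, P0c; constructor.
Qed.

Lemma h_smooth : smooth h.
Proof. apply Q_smooth, h_Q. Qed.

Lemma psi_nonpos P t : t <= 0 -> psi P t = 0.
Proof. intros; unfold psi; destruct Rlt_dec; lra. Qed.

Lemma q_nonpos x : x <= 0 \/ 1/2 <= x -> q x <= 0.
Proof. unfold q; intros [H|H]; nra. Qed.

Lemma g_out x : x <= 0 \/ 1/2 <= x -> g x = 0.
Proof. intros; unfold g; apply psi_nonpos, q_nonpos; auto. Qed.

Lemma h_out x : x <= 0 \/ 1/2 <= x -> h x = 0.
Proof. intros; unfold h; rewrite psi_nonpos. ring. apply q_nonpos; auto. Qed.

Lemma h_compact : compact_support h.
Proof.
  exists 1. intros x Hx. apply h_out.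
  destruct (Rle_dec 0 x). rewrite Rabs_pos_eq in Hx; lra. lra.
Qed.

Lemma h_supp : support_in_nonneg h.
Proof. intros x Hx. apply h_out. lra. Qed.

Lemma g_cont x : continuous g x.
Proof. apply (@ex_derive_continuous R_AbsRing R_NormedModule g x). exists (h x). apply g_deriv. Qed.

Lemma h_cont x : continuous h x.
Proof. apply (@ex_derive_continuous R_AbsRing R_NormedModule h x). destruct (Q_deriv h h_Q) as [h' [_ D]]. exists (h' x). apply D. Qed.

Lemma g_bounds x : 0 <= g x <= 1.
Proof.
  unfold g, psi, P1c. destruct Rlt_dec as [H|H]; [|lra].
  split. rewrite Rmult_1_l. left; apply exp_pos.
  rewrite Rmult_1_l. rewrite <- exp_0. left. apply exp_increasing.
  assert (0 < / q x) by (apply Rinv_0_lt_compat; auto). lra.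
Qed.

Lemma g_lower x : 1/8 <= x <= 3/8 -> exp (- (64/3)) <= g x.
Proof.
  intros Hx. assert (Hq: 3/64 <= q x) by (unfold q; nra).
  unfold g, psi, P1c. destruct Rlt_dec as [H|H]; [|lra].
  rewrite Rmult_1_l. destruct (Req_dec (q x) (3/64)) as [E|E].
  - rewrite E. right. f_equal. field.
  - left. apply exp_increasing. apply Ropp_lt_contravar.
    replace (64/3) with (/ (3/64)) by field. apply Rinv_lt_contravar. nra. lra.
Qed.

Lemma cont_lin (xi : R) x : continuous (fun x : R => xi * x) x.
Proof. apply (continuous_mult (fun _ : R => xi) (fun x : R => x)). apply continuous_const. apply continuous_id. Qed.

Lemma cont_mul_cos f xi x : continuous f x -> continuous (fun x => f x * cos (xi * x)) x.
Proof.
  intros H. apply (continuous_mult f (fun x => cos (xi * x))); auto.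
  apply continuous_cos_comp. apply cont_lin.
Qed.

Lemma cont_mul_sin f xi x : continuous f x -> continuous (fun x => f x * sin (xi * x)) x.
Proof.
  intros H. apply (continuous_mult f (fun x => sin (xi * x))); auto.
  apply continuous_sin_comp. apply cont_lin.
Qed.

Lemma fourier_eq f xi : (forall x, continuous f x) -> (forall x, x <= 0 \/ 1/2 <= x -> f x = 0) ->
  fourier f xi = (RInt (fun x => f x * cos (xi * x)) 0 (1/2), RInt (fun x => f x * sin (xi * x)) 0 (1/2)).
Proof.
  intros Hc Hz. unfold fourier.
  set (F := fun x : R => scal (f x) ((cos (xi * x), sin (xi * x)) : C)).
  set (l := (RInt (fun x => f x * cos (xi * x)) 0 (1/2), RInt (fun x => f x * sin (xi * x)) 0 (1/2)) : C).
  assert (Hmid : is_RInt (V := C_R_CompleteNormedModule) F 0 (1/2) l).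
  { apply (is_RInt_fct_extend_pair (U := R_NormedModule) (V := R_NormedModule)).
    - eapply is_RInt_ext; [|apply (RInt_correct (V := R_CompleteNormedModule))].
      2:{ apply ex_RInt_continuous. intros; apply cont_mul_cos; auto. }
      intros; reflexivity.
    - eapply is_RInt_ext; [|apply (RInt_correct (V := R_CompleteNormedModule))].
      2:{ apply ex_RInt_continuous. intros; apply cont_mul_sin; auto. }
      intros; reflexivity. }
  assert (Hzero : forall a b, (forall x, Rmin a b < x < Rmax a b -> f x = 0) ->
     is_RInt (V := C_R_CompleteNormedModule) F a b (scal (b - a) (RtoC 0))).
  { intros a b Hab. 
    eapply is_RInt_ext; [|apply (is_RInt_const (V := C_R_CompleteNormedModule) a b (RtoC 0))].
    intros x Hx. unfold F. rewrite Hab by auto. 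
    unfold scal; simpl; unfold prod_scal, RtoC; simpl; unfold scal; simpl; unfold mult; simpl.
    f_equal; ring. }
  apply (is_RInt_gen_unique (V := C_R_CompleteNormedModule)).
  unfold is_RInt_gen.
  apply filterlimi_lim_ext_loc with (f := fun _ => l).
  2:{ apply filterlim_const. }
  apply Filter_prod with (Q := fun a => a < 0) (R := fun b => 1/2 < b).
  - exists 0. auto.
  - exists (1/2). auto.
  - intros a b Ha Hb. simpl.
    replace l with (plus (plus (scal (0 - a) (RtoC 0)) l) (scal (b - 1/2) (RtoC 0))).
    2:{ unfold l, plus, scal; simpl; unfold prod_plus, prod_scal, RtoC; simpl.
        unfold plus, scal; simpl; unfold mult; simpl. f_equal; ring. }
    apply (is_RInt_Chasles (V := C_R_CompleteNormedModule)) with (1/2).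
    apply (is_RInt_Chasles (V := C_R_CompleteNormedModule)) with 0.
    + apply Hzero. intros x Hx. apply Hz. rewrite Rmin_left, Rmax_right in Hx by lra. lra.
    + exact Hmid.
    + apply Hzero. intros x Hx. apply Hz. rewrite Rmin_left, Rmax_right in Hx by lra. lra.
Qed.

Definition Cg (xi : R) : R := RInt (fun x => g x * cos (xi * x)) 0 (1/2).
Definition Sg (xi : R) : R := RInt (fun x => g x * sin (xi * x)) 0 (1/2).

Lemma cont_comb (f1 f2 : R -> R) c (x : R) : continuous f1 x -> continuous f2 x -> continuous (fun x => f1 x - c * f2 x) x.
Proof.
  intros H1 H2. apply (continuous_plus f1 (fun x => opp (mult c (f2 x)))); auto.
  apply (continuous_opp (fun x => mult c (f2 x))).
  apply (continuous_mult (fun _ => c) f2); auto. apply continuous_const.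
Qed.

Lemma cont_comb' (f1 f2 : R -> R) c (x : R) : continuous f1 x -> continuous f2 x -> continuous (fun x => f1 x + c * f2 x) x.
Proof.
  intros H1 H2. apply (continuous_plus f1 (fun x => (mult c (f2 x)))); auto.
  apply (continuous_mult (fun _ => c) f2); auto. apply continuous_const.
Qed.

Lemma is_derive_lin xi x : is_derive (fun x : R => xi * x) x xi.
Proof. eapply is_derive_eq. apply (is_derive_scal (fun x => x) x xi 1). apply (is_derive_id x). apply Rmult_1_r. Qed.

Lemma ex_RInt_gcos xi : ex_RInt (fun x => g x * cos (xi * x)) 0 (1/2).
Proof. apply (ex_RInt_continuous (V := R_CompleteNormedModule)). intros; apply cont_mul_cos, g_cont. Qed.
Lemma ex_RInt_gsin xi : ex_RInt (fun x => g x * sin (xi * x)) 0 (1/2).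
Proof. apply (ex_RInt_continuous (V := R_CompleteNormedModule)). intros; apply cont_mul_sin, g_cont. Qed.

Lemma g0 : g 0 = 0. Proof. apply g_out; lra. Qed.
Lemma g12 : g (1/2) = 0. Proof. apply g_out; lra. Qed.

Lemma is_RInt_eq (f : R -> R) a b l l' : is_RInt f a b l -> l = l' -> is_RInt f a b l'.
Proof. intros H <-; auto. Qed.

Lemma ibp_cos xi : RInt (fun x => h x * cos (xi * x)) 0 (1/2) = xi * Sg xi.
Proof.
  apply (is_RInt_unique (V := R_CompleteNormedModule)).
  assert (D : is_RInt (V := R_CompleteNormedModule) (fun x => h x * cos (xi * x) - xi * (g x * sin (xi * x))) 0 (1/2) 0).
  { eapply is_RInt_eq. eapply is_RInt_ext. 2: apply (is_RInt_derive (fun x => g x * cos (xi * x))).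
    - intros; reflexivity.
    - intros x _. eapply is_derive_eq.
      apply (is_derive_mult g (fun x => cos (xi * x))). apply g_deriv.
      apply (is_derive_comp cos (fun x => xi * x)). apply is_derive_cos. apply is_derive_lin.
      intros; apply Rmult_comm.
      unfold plus, mult, scal; simpl; unfold mult; simpl. ring.
    - intros x _. apply cont_comb. apply cont_mul_cos, h_cont. apply cont_mul_sin, g_cont.
    - unfold minus, plus, opp; simpl. rewrite g0, g12. ring. }
  assert (S : is_RInt (V := R_CompleteNormedModule) (fun x => xi * (g x * sin (xi * x))) 0 (1/2) (xi * Sg xi)).
  { apply (is_RInt_scal (V := R_CompleteNormedModule) (fun x => g x * sin (xi * x))). apply (RInt_correct (V := R_CompleteNormedModule)). apply ex_RInt_gsin. }
  eapply is_RInt_ext. 2: eapply is_RInt_eq. 2: apply (is_RInt_plus (V := R_CompleteNormedModule) _ _ _ _ _ _ D S).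
  - intros; simpl. unfold plus; simpl. ring.
  - unfold plus; simpl. ring.
Qed.

Lemma ibp_sin xi : RInt (fun x => h x * sin (xi * x)) 0 (1/2) = - xi * Cg xi.
Proof.
  apply (is_RInt_unique (V := R_CompleteNormedModule)).
  assert (D : is_RInt (V := R_CompleteNormedModule) (fun x => h x * sin (xi * x) + xi * (g x * cos (xi * x))) 0 (1/2) 0).
  { eapply is_RInt_eq. eapply is_RInt_ext. 2: apply (is_RInt_derive (fun x => g x * sin (xi * x))).
    - intros; reflexivity.
    - intros x _. eapply is_derive_eq.
      apply (is_derive_mult g (fun x => sin (xi * x))). apply g_deriv.
      apply (is_derive_comp sin (fun x => xi * x)). apply is_derive_sin. apply is_derive_lin.
      intros; apply Rmult_comm.
      unfold plus, mult, scal; simpl; unfold mult; simpl. ring.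
    - intros x _. apply cont_comb'. apply cont_mul_sin, h_cont. apply cont_mul_cos, g_cont.
    - unfold minus, plus, opp; simpl. rewrite g0, g12. ring. }
  assert (S : is_RInt (V := R_CompleteNormedModule) (fun x => (- xi) * (g x * cos (xi * x))) 0 (1/2) (- xi * Cg xi)).
  { apply (is_RInt_scal (V := R_CompleteNormedModule) (fun x => g x * cos (xi * x))). apply (RInt_correct (V := R_CompleteNormedModule)). apply ex_RInt_gcos. }
  eapply is_RInt_ext. 2: eapply is_RInt_eq. 2: apply (is_RInt_plus (V := R_CompleteNormedModule) _ _ _ _ _ _ D S).
  - intros; simpl. unfold plus; simpl. ring.
  - unfold plus; simpl. ring.
Qed.

Lemma Cg_opp xi : Cg (- xi) = Cg xi.
Proof. unfold Cg. apply RInt_ext. intros x _. rewrite Ropp_mult_distr_l_reverse, cos_neg. reflexivity. Qed.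

Lemma Sg_opp xi : Sg (- xi) = - Sg xi.
Proof.
  unfold Sg. rewrite <- (RInt_opp (V := R_CompleteNormedModule)) by apply ex_RInt_gsin.
  apply RInt_ext. intros x _. rewrite Ropp_mult_distr_l_reverse, sin_neg. unfold opp; simpl. ring.
Qed.

Lemma abs_sin_le x : Rabs (sin x) <= Rabs x.
Proof.
  assert (K : forall x, 0 < x -> Rabs (sin x) <= x).
  { intros y Hy. pose proof (sin_lt_x y Hy). pose proof (SIN_bound y).
    destruct (Rle_dec 1 y). apply Rabs_le. lra.
    assert (0 < sin y) by (apply sin_gt_0; [lra| pose proof PI2_1; lra]).
    rewrite Rabs_pos_eq; lra. }
  destruct (Rtotal_order x 0) as [H|[H|H]].
  - pose proof (K (- x)) as K'. rewrite sin_neg, Rabs_Ropp in K'. rewrite (Rabs_left x) by lra. apply K'; lra.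
  - subst. rewrite sin_0. lra.
  - rewrite (Rabs_pos_eq x) by lra. apply K; auto.
Qed.

Lemma cos_lower x : 1 - x ^ 2 / 2 <= cos x.
Proof.
  replace x with (2 * (x / 2)) at 2 by field. rewrite cos_2a_sin.
  pose proof (abs_sin_le (x / 2)).
  assert (sin (x/2) ^ 2 <= (x/2)^2) by (rewrite <- (pow2_abs (sin _)), <- (pow2_abs (x/2)); apply pow_incr; split; [apply Rabs_pos | auto]).
  simpl. nra.
Qed.

Lemma lip_cont (f : R -> R) L x : 0 <= L -> (forall a b, Rabs (f a - f b) <= L * Rabs (a - b)) -> continuous f x.
Proof.
  intros HL Hf. apply continuity_pt_filterlim.
  intros eps Heps. exists (eps / (L + 1)). split. apply Rdiv_lt_0_compat; lra.
  intros y [_ Hy]. simpl in *. unfold R_dist in *.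
  eapply Rle_lt_trans. apply Hf.
  apply Rle_lt_trans with (L * (eps / (L+1))). apply Rmult_le_compat_l; lra.
  unfold Rdiv. rewrite <- Rmult_assoc. apply Rmult_lt_reg_r with (L + 1). lra.
  rewrite Rmult_assoc, Rinv_l by lra. nra.
Qed.

Lemma cos_lip a b : Rabs (cos a - cos b) <= Rabs (a - b).
Proof.
  rewrite form2. rewrite !Rabs_mult.
  pose proof (abs_sin_le ((a - b) / 2)). pose proof (SIN_bound ((a + b) / 2)).
  assert (Rabs (sin ((a + b) / 2)) <= 1) by (apply Rabs_le; lra).
  replace (Rabs (-2)) with 2 by (rewrite Rabs_left; lra).
  replace (Rabs ((a - b) / 2)) with (Rabs (a - b) / 2) in H.
  2:{ unfold Rdiv. rewrite Rabs_mult, (Rabs_pos_eq (/2)) by lra. reflexivity. }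
  pose proof (Rabs_pos (sin ((a - b) / 2))). pose proof (Rabs_pos (sin ((a + b) / 2))). nra.
Qed.

Lemma sin_lip a b : Rabs (sin a - sin b) <= Rabs (a - b).
Proof.
  rewrite form4. rewrite !Rabs_mult.
  pose proof (abs_sin_le ((a - b) / 2)). pose proof (COS_bound ((a + b) / 2)).
  assert (Rabs (cos ((a + b) / 2)) <= 1) by (apply Rabs_le; lra).
  replace (Rabs 2) with 2 by (rewrite Rabs_pos_eq; lra).
  replace (Rabs ((a - b) / 2)) with (Rabs (a - b) / 2) in H.
  2:{ unfold Rdiv. rewrite Rabs_mult, (Rabs_pos_eq (/2)) by lra. reflexivity. }
  pose proof (Rabs_pos (sin ((a - b) / 2))). pose proof (Rabs_pos (cos ((a + b) / 2))). nra.
Qed.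

Lemma trig_int_lip (T : R -> R) (HT : forall a b, Rabs (T a - T b) <= Rabs (a - b))
  (HE : forall xi, ex_RInt (fun x => g x * T (xi * x)) 0 (1/2)) a b :
  Rabs (RInt (fun x => g x * T (a * x)) 0 (1/2) - RInt (fun x => g x * T (b * x)) 0 (1/2)) <= 1/2 * Rabs (a - b).
Proof.
  assert (E := RInt_minus (V := R_CompleteNormedModule) _ _ 0 (1/2) (HE a) (HE b)).
  change (RInt (fun x : R => g x * T (a * x)) 0 (1 / 2) - RInt (fun x : R => g x * T (b * x)) 0 (1 / 2))
    with (minus (RInt (fun x : R => g x * T (a * x)) 0 (1 / 2)) (RInt (fun x : R => g x * T (b * x)) 0 (1 / 2))).
  rewrite <- E.
  replace (1/2 * Rabs (a - b)) with ((1/2 - 0) * Rabs (a - b)) by ring.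
  apply abs_RInt_le_const. lra.
  apply (ex_RInt_minus (V := R_CompleteNormedModule)); auto.
  intros t Ht. unfold minus, plus, opp; simpl.
  replace (g t * T (a * t) + - (g t * T (b * t))) with (g t * (T (a * t) - T (b * t))) by ring.
  rewrite Rabs_mult. pose proof (g_bounds t). rewrite (Rabs_pos_eq (g t)) by lra.
  pose proof (HT (a * t) (b * t)). replace (a * t - b * t) with ((a - b) * t) in H0 by ring.
  rewrite Rabs_mult, (Rabs_pos_eq t) in H0 by lra.
  pose proof (Rabs_pos (T (a * t) - T (b * t))). pose proof (Rabs_pos (a - b)).
  apply Rle_trans with (1 * Rabs (T (a * t) - T (b * t))). apply Rmult_le_compat_r; lra.
  nra.
Qed.

Lemma Cg_cont x : continuous Cg x.
Proof.
  apply (lip_cont Cg (1/2)). lra. intros a b. unfold Cg.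
  apply (trig_int_lip cos cos_lip ex_RInt_gcos).
Qed.

Lemma Sg_cont x : continuous Sg x.
Proof.
  apply (lip_cont Sg (1/2)). lra. intros a b. unfold Sg.
  apply (trig_int_lip sin sin_lip ex_RInt_gsin).
Qed.

Definition G : R := RInt g 0 (1/2).

Lemma ex_RInt_g a b : ex_RInt g a b.
Proof. apply (ex_RInt_continuous (V := R_CompleteNormedModule)). intros; apply g_cont. Qed.

Lemma RInt_cg c : RInt (fun x => c * g x) 0 (1/2) = c * G.
Proof. apply (RInt_scal (V := R_CompleteNormedModule) g). apply ex_RInt_g. Qed.

Lemma ex_RInt_cg c : ex_RInt (fun x => c * g x) 0 (1/2).
Proof. apply (ex_RInt_scal (V := R_CompleteNormedModule) g). apply ex_RInt_g. Qed.

Lemma G_pos : exp (- (64/3)) / 4 <= G.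
Proof.
  unfold G.
  rewrite <- (RInt_Chasles (V := R_CompleteNormedModule) g 0 (1/8) (1/2)) by apply ex_RInt_g.
  rewrite <- (RInt_Chasles (V := R_CompleteNormedModule) g (1/8) (3/8) (1/2)) by apply ex_RInt_g.
  unfold plus; simpl.
  assert (A : 0 <= RInt g 0 (1/8)).
  { apply RInt_ge_0. lra. apply ex_RInt_g. intros; apply g_bounds. }
  assert (B : 0 <= RInt g (3/8) (1/2)).
  { apply RInt_ge_0. lra. apply ex_RInt_g. intros; apply g_bounds. }
  assert (C : RInt (fun _ => exp (- (64/3))) (1/8) (3/8) <= RInt g (1/8) (3/8)).
  { apply RInt_le. lra. apply ex_RInt_const. apply ex_RInt_g. intros; apply g_lower; lra. }
  rewrite RInt_const in C. unfold scal in C; simpl in C; unfold mult in C; simpl in C.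
  lra.
Qed.

Lemma Cg_lower xi : -1 <= xi <= 1 -> 7/8 * G <= Cg xi.
Proof.
  intros Hxi. rewrite <- RInt_cg. unfold Cg. apply RInt_le. lra. apply ex_RInt_cg. apply ex_RInt_gcos.
  intros x Hx. pose proof (g_bounds x). pose proof (cos_lower (xi * x)).
  assert ((xi * x) ^ 2 <= 1/4).
  { rewrite Rpow_mult_distr. assert (xi ^ 2 <= 1) by (simpl; nra). assert (x ^ 2 <= 1/4) by (simpl; nra).
    assert (0 <= x ^ 2) by apply pow2_ge_0. nra. }
  assert (cos (xi * x) >= 7/8) by lra. nra.
Qed.

Lemma Sg_bound xi : -1 <= xi <= 1 -> - (1/2 * G) <= Sg xi <= 1/2 * G.
Proof.
  intros Hxi.
  assert (Hs : forall x, 0 < x < 1/2 -> Rabs (sin (xi * x)) <= 1/2).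
  { intros x Hx. eapply Rle_trans. apply abs_sin_le. rewrite Rabs_mult.
    rewrite (Rabs_pos_eq x) by lra. assert (Rabs xi <= 1) by (apply Rabs_le; lra).
    pose proof (Rabs_pos xi). nra. }
  split.
  - replace (- (1/2 * G)) with ((-1/2) * G) by lra. rewrite <- RInt_cg. unfold Sg.
    apply RInt_le. lra. apply ex_RInt_cg. apply ex_RInt_gsin.
    intros x Hx. pose proof (g_bounds x). specialize (Hs x Hx). apply Rabs_le_between in Hs. nra.
  - rewrite <- RInt_cg. unfold Sg.
    apply RInt_le. lra. apply ex_RInt_gsin. apply ex_RInt_cg.
    intros x Hx. pose proof (g_bounds x). specialize (Hs x Hx). apply Rabs_le_between in Hs. nra.
Qed.

Lemma cmul (f1 f2 : R -> R) (x : R) : continuous f1 x -> continuous f2 x -> continuous (fun x => f1 x * f2 x) x.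
Proof. intros; apply (continuous_mult f1 f2); auto. Qed.
Lemma cminus (f1 f2 : R -> R) (x : R) : continuous f1 x -> continuous f2 x -> continuous (fun x => f1 x - f2 x) x.
Proof. intros; apply (continuous_minus f1 f2); auto. Qed.
Lemma cid (x : R) : continuous (fun x : R => x) x.
Proof. apply continuous_id. Qed.
Lemma cconst (c x : R) : continuous (fun _ : R => c) x.
Proof. apply continuous_const. Qed.

Lemma fourier_h xi : fourier h xi = (xi * Sg xi, - xi * Cg xi).
Proof.
  rewrite fourier_eq. rewrite ibp_cos, ibp_sin. reflexivity.
  apply h_cont. apply h_out.
Qed.


Definition w (kappa : R) xi := / (xi ^ 2 + kappa).
Definition u (kappa : R) xi := w kappa xi * (xi * Sg xi * (xi * Sg xi) - xi * Cg xi * (xi * Cg xi)).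
Definition v (kappa : R) xi := w kappa xi * (-2 * (xi * xi) * Sg xi * Cg xi).

Lemma w_cont (kappa : R) (hk : 1 <= kappa <= 2) x : continuous (w kappa) x.
Proof.
  apply (@ex_derive_continuous R_AbsRing R_NormedModule (w kappa) x). unfold w.
  auto_derive. pose proof (pow2_ge_0 x). lra.
Qed.

Lemma u_cont (kappa : R) (hk : 1 <= kappa <= 2) x : continuous (u kappa) x.
Proof.
  unfold u. apply cmul. apply (w_cont kappa hk).
  apply cminus; apply cmul; apply cmul; auto using cid, Sg_cont, Cg_cont.
Qed.

Lemma v_cont (kappa : R) (hk : 1 <= kappa <= 2) x : continuous (v kappa) x.
Proof.
  unfold v. apply cmul. apply (w_cont kappa hk).
  apply cmul; [apply cmul|auto using Cg_cont]. apply cmul. apply cconst. apply cmul; apply cid. apply Sg_cont.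
Qed.

Lemma integrand_eq (kappa : R) xi :
  scal (/ (xi ^ 2 + kappa)) (Cmult (Cconj (fourier h (- xi))) (fourier h xi)) = ((u kappa xi, v kappa xi) : C).
Proof.
  rewrite !fourier_h, Cg_opp, Sg_opp. unfold u, v, w, Cmult, Cconj. simpl.
  unfold scal; simpl; unfold prod_scal; simpl; unfold scal; simpl; unfold mult; simpl.
  f_equal; ring.
Qed.

Lemma v_odd (kappa : R) xi : v kappa (- xi) = - v kappa xi.
Proof. unfold v, w. rewrite Cg_opp, Sg_opp. replace ((- xi) ^ 2) with (xi ^ 2) by ring. ring. Qed.

Lemma RInt_v (kappa : R) (hk : 1 <= kappa <= 2) : RInt (v kappa) (-1) 1 = 0.
Proof.
  assert (Hex : ex_RInt (v kappa) (-1) 1).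
  { apply (ex_RInt_continuous (V := R_CompleteNormedModule)). intros; apply (v_cont kappa hk). }
  set (I := RInt (v kappa) (-1) 1).
  assert (H1 : is_RInt (V := R_CompleteNormedModule) (v kappa) (-1) 1 I) by (apply (RInt_correct (V := R_CompleteNormedModule)); auto).
  assert (H2 : is_RInt (V := R_CompleteNormedModule) (v kappa) 1 (-1) I).
  { eapply is_RInt_ext. 2: apply (is_RInt_comp_opp (V := R_CompleteNormedModule)).
    - intros x _. unfold opp; simpl. rewrite v_odd. apply Ropp_involutive.
    - replace (- (1)) with (-1) by ring. replace (- -1) with 1 by ring. auto. }
  apply (is_RInt_swap (V := R_CompleteNormedModule)) in H2.
  pose proof (is_RInt_unique (V:=R_CompleteNormedModule) _ _ _ _ H2) as E. fold I in E.
  unfold opp in E; simpl in E. lra.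
Qed.

Lemma u_bound (kappa : R) (hk : 1 <= kappa <= 2) xi : -1 < xi < 1 -> u kappa xi <= - (G ^ 2 / 6) * xi ^ 2.
Proof.
  intros Hxi. pose proof G_pos as HG. assert (0 < exp (- (64/3))) by apply exp_pos.
  assert (HG0 : 0 < G) by lra.
  pose proof (Cg_lower xi ltac:(lra)). pose proof (Sg_bound xi ltac:(lra)).
  assert (HS : Sg xi * Sg xi <= G * G / 4) by nra.
  assert (HC : 49/64 * (G * G) <= Cg xi * Cg xi) by nra.
  assert (Hq : xi * Sg xi * (xi * Sg xi) - xi * Cg xi * (xi * Cg xi) <= - (1/2) * (G * G) * (xi * xi)).
  { replace (xi * Sg xi * (xi * Sg xi) - xi * Cg xi * (xi * Cg xi)) with ((xi * xi) * (Sg xi * Sg xi - Cg xi * Cg xi)) by ring.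
    assert (0 <= xi * xi) by nra. nra. }
  assert (Hw1 : 1/3 <= w kappa xi).
  { unfold w. assert (xi ^ 2 + kappa <= 3) by (simpl; nra). assert (0 < xi ^ 2 + kappa) by (simpl; nra).
    replace (1/3) with (/3) by field. apply Rinv_le_contravar; lra. }
  unfold u. simpl.
  assert (0 <= G * G * (xi * xi)) by (apply Rmult_le_pos; nra).
  nra.
Qed.

Lemma RInt_sq : RInt (fun xi => - (G ^ 2 / 6) * xi ^ 2) (-1) 1 = - (G ^ 2 / 9).
Proof.
  apply (is_RInt_unique (V := R_CompleteNormedModule)).
  eapply is_RInt_eq. apply (is_RInt_derive (fun xi => - (G ^ 2 / 6) * (xi ^ 3 / 3))).
  - intros x _. auto_derive. auto. field.
  - intros x _. apply cmul. apply cconst. apply (@ex_derive_continuous R_AbsRing R_NormedModule). auto_derive; auto.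
  - unfold minus, plus, opp; simpl. field.
Qed.


Theorem lemma3p3 (kappa : R) (hk : 1 <= kappa <= 2) :
  exists h : R -> R,
    smooth h /\ compact_support h /\ support_in_nonneg h /\
    exists r : R, r < 0 /\
      RInt (V := C_R_CompleteNormedModule)
        (fun xi : R =>
           scal (/ (xi ^ 2 + kappa))
             (Cmult (Cconj (fourier h (- xi))) (fourier h xi)))
        (-1) 1
      = RtoC r.
Proof.
  exists h. split. apply h_smooth. split. apply h_compact. split. apply h_supp.
  exists (RInt (u kappa) (-1) 1). split.
  - apply Rle_lt_trans with (RInt (fun xi => - (G ^ 2 / 6) * xi ^ 2) (-1) 1).
    + apply RInt_le. lra.
      apply (ex_RInt_continuous (V := R_CompleteNormedModule)). intros; apply (u_cont kappa hk).
      apply (ex_RInt_continuous (V := R_CompleteNormedModule)). intros. apply cmul. apply cconst. 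
      apply (@ex_derive_continuous R_AbsRing R_NormedModule). auto_derive; auto.
      intros x Hx. apply (u_bound kappa hk); auto.
    + rewrite RInt_sq. pose proof G_pos. assert (0 < exp (- (64/3))) by apply exp_pos.
      assert (0 < G) by lra. assert (0 < G ^ 2) by (apply pow_lt; auto). lra.
  - assert (E : RInt (V := C_R_CompleteNormedModule) (fun xi : R =>
           scal (/ (xi ^ 2 + kappa))
             (Cmult (Cconj (fourier h (- xi))) (fourier h xi))) (-1) 1
        = RInt (V := C_R_CompleteNormedModule) (fun xi => ((u kappa xi, v kappa xi) : C)) (-1) 1).
    { apply RInt_ext. intros; apply integrand_eq. }
    rewrite E.
    transitivity ((RInt (u kappa) (-1) 1, RInt (v kappa) (-1) 1) : C).
    2:{ unfold RtoC. rewrite (RInt_v kappa hk). reflexivity. }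
    apply (is_RInt_unique (V := C_R_CompleteNormedModule)).
    apply (is_RInt_fct_extend_pair (U := R_NormedModule) (V := R_NormedModule));
      apply (RInt_correct (V := R_CompleteNormedModule));
      apply (ex_RInt_continuous (V := R_CompleteNormedModule)); intros; [apply (u_cont kappa hk) | apply (v_cont kappa hk)].
Qed.
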